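(* Let $D$ be a connection on a vector bundle $E$ and let $F\subseteq E$ be a parallel subbundle. If the induced connections on $F$ and on $E/F$ are exact, and the curvature of the induced connection on $E/F$ is injective, then $D$ is exact.
   Context: A subbundle $F$ is parallel if $D(\Gamma(F))\subseteq\Gamma(\Lambda^1\otimes F)$; then $D$ restricts to a connection on $F$ and descends to a connection on $E/F$. For a connection $D$ on $E$: $D^\wedge$ is the exterior covariant derivative $\phi_b{}^\alpha\mapsto D_{[a}\phi_{b]}{}^\alpha$, $\kappa=D^\wedge\circ D:E\to\Lambda^2\otimes E$ the curvature (assumed of constant rank). $D$ is exact if every section $\phi$ of $\Lambda^1\otimes E$ with $D^\wedge\phi=\kappa(\psi)$ for some section $\psi$ of $E$ is of the form $D\eta$ for some section $\eta$ of $E$. Statements are local. *)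

(* Defs.v *)
(* Local model of a connection on a vector bundle:
   the base is an open set U of R^n (points are row vectors 'rV[R]_n),
   E = U x R^k is trivialised, a connection is D = d + A with
   connection 1-form A : 'I_n -> (point -> 'M_k), and a subbundle F of rank r
   is given by a smooth frame Fr : point -> 'M_(r,k) of full row rank
   (F_x = row space of Fr x).  Sections are functions on the whole space of
   which only the restriction to the open set under consideration matters. *)
From HB Require Import structures.
From mathcomp Require Import all_boot all_order all_algebra.
From mathcomp Require Import all_classical all_reals all_analysis.
Set Implicit Arguments. Unset Strict Implicit. Unset Printing Implicit Defensive.
Import Order.TTheory GRing.Theory Num.Theory.
Import numFieldNormedType.Exports.
Local Open Scope classical_set_scope.
Local Open Scope ring_scope.

Section LocalConnections.
Variables (R : realType) (n k r : nat).
Local Notation P := 'rV[R]_n.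

Definition ecoord (a : 'I_n) : P := delta_mx 0 a.

Definition pd {W : normedModType R} (a : 'I_n) (f : P -> W) : P -> W :=
  fun x => 'D_(ecoord a) f x.

Fixpoint iter_pd {W : normedModType R} (s : seq 'I_n) (f : P -> W) : P -> W :=
  match s with [::] => f | a :: s' => pd a (iter_pd s' f) end.

Definition smooth_on {W : normedModType R} (V : set P) (f : P -> W) : Prop :=
  forall s : seq 'I_n,
    (forall x, V x -> iter_pd s f @ x --> iter_pd s f x) /\
    (forall x a, V x -> derivable (iter_pd s f) x (ecoord a)).

(* sections of E, Lambda^1 (x) E, Lambda^2 (x) E (in coordinates) *)
Definition sec := P -> 'rV[R]_k.
Definition sec1 := 'I_n -> P -> 'rV[R]_k.
Definition sec2 := 'I_n -> 'I_n -> P -> 'rV[R]_k.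

Definition smooth1 (V : set P) (phi : sec1) := forall a, smooth_on V (phi a).

Variable A : 'I_n -> P -> 'M[R]_k.

Definition Dsec (eta : sec) : sec1 :=
  fun a x => pd a eta x + eta x *m A a x.

(* exterior covariant derivative  phi_b |-> D_[a phi_b] *)
Definition Dwedge (phi : sec1) : sec2 :=
  fun a b x => 2^-1 *: ((pd a (phi b) x + phi b x *m A a x)
                       - (pd b (phi a) x + phi a x *m A b x)).

Definition curv (psi : sec) : sec2 := Dwedge (Dsec psi).

Definition exact_conn (U : set P) : Prop :=
  forall V : set P, open V -> V `<=` U ->
  forall (phi : sec1) (psi : sec), smooth1 V phi -> smooth_on V psi ->
  (forall a b x, V x -> Dwedge phi a b x = curv psi a b x) ->
  exists eta : sec, smooth_on V eta /\ forall a x, V x -> Dsec eta a x = phi a x.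

Variable Fr : P -> 'M[R]_(r, k).

Definition inF (x : P) (v : 'rV[R]_k) : bool := (v <= Fr x)%MS.

Definition parallel (U : set P) : Prop :=
  forall V : set P, open V -> V `<=` U ->
  forall eta : sec, smooth_on V eta -> (forall x, V x -> inF x (eta x)) ->
  forall a x, V x -> inF x (Dsec eta a x).

Definition exact_sub (U : set P) : Prop :=
  forall V : set P, open V -> V `<=` U ->
  forall (phi : sec1) (psi : sec), smooth1 V phi -> smooth_on V psi ->
  (forall a x, V x -> inF x (phi a x)) -> (forall x, V x -> inF x (psi x)) ->
  (forall a b x, V x -> Dwedge phi a b x = curv psi a b x) ->
  exists eta : sec, smooth_on V eta /\ (forall x, V x -> inF x (eta x)) /\
    forall a x, V x -> Dsec eta a x = phi a x.

(* the induced connection on E/F is exact; sections of (Lambda^p (x)) E/F are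
   represented by sections of (Lambda^p (x)) E modulo F, and the induced
   operators are the classes of D, D^wedge, kappa applied to representatives *)
Definition exact_quot (U : set P) : Prop :=
  forall V : set P, open V -> V `<=` U ->
  forall (phi : sec1) (psi : sec), smooth1 V phi -> smooth_on V psi ->
  (forall a b x, V x -> inF x (Dwedge phi a b x - curv psi a b x)) ->
  exists eta : sec, smooth_on V eta /\
    forall a x, V x -> inF x (Dsec eta a x - phi a x).

Definition curv_quot_injective (U : set P) : Prop :=
  forall V : set P, open V -> V `<=` U ->
  forall psi : sec, smooth_on V psi ->
  (forall a b x, V x -> inF x (curv psi a b x)) ->
  forall x, V x -> inF x (psi x).

End LocalConnections.

(* Main.v *)
Require Import Defs.
From HB Require Import structures.
From mathcomp Require Import all_boot all_order all_algebra.
From mathcomp Require Import all_classical all_reals all_analysis.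
Set Implicit Arguments. Unset Strict Implicit. Unset Printing Implicit Defensive.
Import Order.TTheory GRing.Theory Num.Theory.
Import numFieldNormedType.Exports.
Local Open Scope classical_set_scope.
Local Open Scope ring_scope.

Lemma mx_cvgP (R : realType) p q (T : Type) (F : set_system T) (FF : Filter F)
  (g : T -> 'M[R]_(p,q)) (l : 'M[R]_(p,q)) :
  g @ F --> l <-> forall i j, (fun t => g t i j) @ F --> l i j.
Proof.
split.
  move=> H i j; exact: (continuous_cvg _ (@coord_continuous R p q i j l) H).
move=> H; apply/cvg_mx_entourageP => A entA.
apply: filter_forall => i; apply: filter_forall => j.
have := (@cvg_entourageP R _ (fmap_filter _ FF) (l i j)).1 (H i j) A entA.
by move=> HH; apply: (@filterS _ F FF _ _ _ HH) => t /= At; rewrite inE.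
Qed.


Arguments mx_cvgP {R p q T F FF} g l.

Section Ent.
Variables (R : realType) (V : normedModType R) (p q : nat).
Implicit Types (f : V -> 'M[R]_(p,q)) (x v : V).

Definition dq (W : normedModType R) (f : V -> W) x v :=
  fun h : R => h^-1 *: ((f \o shift x) (h *: v) - f x).

Lemma dq_entry f x v i j :
  (fun h => dq f x v h i j) = dq (fun y => f y i j) x v.
Proof. by apply/funext => h; rewrite /dq /= !mxE. Qed.

Lemma derivable_mxP f x v :
  derivable f x v <-> forall i j, derivable (fun y => f y i j) x v.
Proof.
split.
  move=> /cvg_ex [l Hl] i j; apply/cvg_ex; exists (l i j).
  have Hl' : dq f x v @ 0^' --> l := Hl.
  have := (mx_cvgP _ _).1 Hl' i j; rewrite dq_entry => H'; apply: H'.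
move=> H; apply/cvg_ex; exists (\matrix_(i,j) 'D_v (fun y => f y i j) x).
apply/mx_cvgP => i j; rewrite mxE.
have /cvg_ex [l Hl] := H i j.
have Hl' : dq (fun y => f y i j) x v @ 0^' --> l := Hl.
rewrite -dq_entry in Hl'.
rewrite /derive (cvg_lim (@norm_hausdorff _ _) Hl); exact Hl'.
Qed.

Lemma derive_mx f x v i j : derivable f x v ->
  'D_v f x i j = 'D_v (fun y => f y i j) x.
Proof.
move=> df; have df' : dq f x v @ 0^' --> 'D_v f x := df.
have := (mx_cvgP _ _).1 df' i j.
rewrite dq_entry => Hl.
by rewrite /derive (cvg_lim (@norm_hausdorff _ _) (Hl (dnbhs_filter _))).
Qed.

End Ent.

Lemma cvg_sumR (R : realType) (T : Type) (F : set_system T) (FF : Filter F)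
  n (f : 'I_n -> T -> R) (l : 'I_n -> R) :
  (forall i, f i @ F --> l i) -> (\sum_(i < n) f i) @ F --> \sum_(i < n) l i.
Proof.
move=> H.
elim/big_ind2 : _ => //.
- exact: cvg_cst.
- by move=> g1 a1 g2 a2 H1 H2; apply: cvgD.
Qed.

Section Prod.
Variables (R : realType) (V : normedModType R) (p q s : nat).
Implicit Types (u : V -> 'M[R]_(p,q)) (M : V -> 'M[R]_(q,s)) (x v : V).

Lemma mulmx_fun u M i j :
  (fun y => (u y *m M y) i j) = \sum_(l < q) (fun y => u y i l * M y l j).
Proof. by apply/funext => y; rewrite fct_sumE /= mxE. Qed.

Lemma derivable_mulmx u M x v : derivable u x v -> derivable M x v ->
  derivable (fun y => u y *m M y) x v.
Proof.
move=> du dM; apply/derivable_mxP => i j; rewrite mulmx_fun.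
apply: derivable_sum => l; apply: derivableM.
  exact: (derivable_mxP _ _ _).1 du i l.
exact: (derivable_mxP _ _ _).1 dM l j.
Qed.

Lemma derive_mulmx u M x v : derivable u x v -> derivable M x v ->
  'D_v (fun y => u y *m M y) x = 'D_v u x *m M x + u x *m 'D_v M x.
Proof.
move=> du dM; apply/matrixP => i j.
rewrite derive_mx; last exact: derivable_mulmx.
rewrite mulmx_fun derive_sum; last first.
  move=> l; apply: derivableM.
    exact: (derivable_mxP _ _ _).1 du i l.
  exact: (derivable_mxP _ _ _).1 dM l j.
rewrite !mxE -big_split /=; apply: eq_bigr => l _.
rewrite deriveM; last 2 first.
- exact: (derivable_mxP _ _ _).1 du i l.
- exact: (derivable_mxP _ _ _).1 dM l j.
rewrite (derive_mx i l du) (derive_mx l j dM) /=.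
rewrite addrC; congr (_ + _); exact: mulrC.
Qed.

Lemma cvg_mulmx (T : Type) (F : set_system T) (FF : Filter F)
  (u : T -> 'M[R]_(p,q)) (M : T -> 'M[R]_(q,s)) (a : 'M[R]_(p,q)) (b : 'M[R]_(q,s)) :
  u @ F --> a -> M @ F --> b -> (fun y => u y *m M y) @ F --> a *m b.
Proof.
move=> cu cM; apply/mx_cvgP => i j.
have -> : (fun y => (u y *m M y) i j) = \sum_(l < q) (fun y => u y i l * M y l j).
  by apply/funext => y; rewrite fct_sumE /= mxE.
rewrite mxE; apply: cvg_sumR => l; apply: cvgM.
  exact: (mx_cvgP _ _).1 cu i l.
exact: (mx_cvgP _ _).1 cM l j.
Qed.

End Prod.

Section Smooth.
Variables (R : realType) (n : nat) (V : set 'rV[R]_n).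
Hypothesis oV : open V.
Local Notation P := 'rV[R]_n.

Definition Pd (W : normedModType R) (s : seq 'I_n) (f : P -> W) :=
  (forall x, V x -> iter_pd s f @ x --> iter_pd s f x) /\
  (forall x a, V x -> derivable (iter_pd s f) x (ecoord R a)).

Definition upto (W : normedModType R) m (f : P -> W) :=
  forall s, (size s <= m)%N -> Pd s f.

Lemma near_V y : V y -> \forall z \near y, V z.
Proof. by move=> Vy; apply: open_nbhs_nbhs; split. Qed.

Lemma nearV_eq (T : Type) y (h1 h2 : P -> T) : V y ->
  (forall z, V z -> h1 z = h2 z) -> \forall z \near y, h1 z = h2 z.
Proof. by move=> Vy H; apply: filterS (near_V Vy) => z Vz; apply: H. Qed.

Lemma iter_pd_rcons (W : normedModType R) s a (f : P -> W) :
  iter_pd s (pd a f) = iter_pd (rcons s a) f.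
Proof. by elim: s => //= b s ->. Qed.

Lemma eqV_iter (W : normedModType R) (f g : P -> W) :
  (forall y, V y -> f y = g y) ->
  forall s y, V y -> iter_pd s f y = iter_pd s g y.
Proof.
move=> H; elim => [|a s IH] y Vy /=; first exact: H.
rewrite /pd; apply: near_eq_derive.
by apply: nearV_eq => // z Vz; apply: IH.
Qed.

Lemma Pd_near (W : normedModType R) s (f : P -> W) (h : P -> W) :
  (forall y, V y -> iter_pd s f y = h y) ->
  (forall x, V x -> h @ x --> h x) ->
  (forall x a, V x -> derivable h x (ecoord R a)) -> Pd s f.
Proof.
move=> E hc hd; split => [x Vx|x a Vx].
  rewrite E //.
  have Hn : \forall z \near x, h z = iter_pd s f z.
    by apply: nearV_eq => // z Vz; rewrite E.
  exact: cvg_trans (near_eq_cvg Hn) (hc x Vx).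
apply: near_eq_derivable (hd x a Vx).
by apply: nearV_eq => // z Vz; rewrite E.
Qed.

Lemma Pd_eqV (W : normedModType R) s (f g : P -> W) :
  (forall y, V y -> f y = g y) -> Pd s f -> Pd s g.
Proof.
move=> E [c d]; apply: (@Pd_near _ s g (iter_pd s f)) => //.
by move=> y Vy; rewrite (eqV_iter E).
Qed.

Lemma upto_le (W : normedModType R) m m' (f : P -> W) :
  (m <= m')%N -> upto m' f -> upto m f.
Proof. by move=> le H s hs; apply: H; apply: leq_trans le. Qed.

Lemma upto_pd (W : normedModType R) m a (f : P -> W) :
  upto m.+1 f -> upto m (pd a f).
Proof.
move=> H s hs; rewrite /Pd iter_pd_rcons; apply: H.
by rewrite size_rcons.
Qed.

Lemma upto_smooth (W : normedModType R) (f : P -> W) :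
  smooth_on V f <-> forall m, upto m f.
Proof.
split; first by move=> H m s _; apply: H.
by move=> H s; apply: (H (size s)).
Qed.

Lemma upto_add (W : normedModType R) m (f g : P -> W) :
  upto m f -> upto m g -> upto m (fun y => f y + g y).
Proof.
move=> Hf Hg.
have E : forall s, (size s <= m)%N -> forall y, V y ->
    iter_pd s (fun y => f y + g y) y = iter_pd s f y + iter_pd s g y.
  elim => [|a s IH] hs y Vy //=.
  have hs' : (size s <= m)%N by apply: leq_trans hs.
  rewrite /pd; rewrite (near_eq_derive _ (_ : \forall z \near y,
     iter_pd s (fun y => f y + g y) z = (iter_pd s f + iter_pd s g) z)).
    by rewrite deriveD //; [apply: (Hf s hs').2 | apply: (Hg s hs').2].
  by apply: nearV_eq => // z Vz; rewrite IH.
move=> s hs; apply: (@Pd_near _ s _ (iter_pd s f + iter_pd s g)).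
- by move=> y Vy; rewrite E.
- by move=> x Vx; exact: (cvgD ((Hf s hs).1 x Vx) ((Hg s hs).1 x Vx)).
- by move=> x a Vx; apply: derivableD; [apply: (Hf s hs).2 | apply: (Hg s hs).2].
Qed.

Lemma upto_opp (W : normedModType R) m (f : P -> W) :
  upto m f -> upto m (fun y => - f y).
Proof.
move=> Hf.
have E : forall s, (size s <= m)%N -> forall y, V y ->
    iter_pd s (fun y => - f y) y = - iter_pd s f y.
  elim => [|a s IH] hs y Vy //=.
  have hs' : (size s <= m)%N by apply: leq_trans hs.
  rewrite /pd; rewrite (near_eq_derive _ (_ : \forall z \near y,
     iter_pd s (fun y => - f y) z = (- iter_pd s f) z)).
    by rewrite deriveN //; apply: (Hf s hs').2.
  by apply: nearV_eq => // z Vz; rewrite IH.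
move=> s hs; apply: (@Pd_near _ s _ (- iter_pd s f)).
- by move=> y Vy; rewrite E.
- by move=> x Vx; exact: (cvgN ((Hf s hs).1 x Vx)).
- by move=> x a Vx; apply: derivableN; apply: (Hf s hs).2.
Qed.

Lemma upto_mul m p q s (u : P -> 'M[R]_(p,q)) (M : P -> 'M[R]_(q,s)) :
  upto m u -> upto m M -> upto m (fun y => u y *m M y).
Proof.
elim: m u M => [|m IH] u M Hu HM.
  move=> t; rewrite leqn0 => /nilP -> /=; split => [x Vx|x a Vx].
    exact: (cvg_mulmx _ ((Hu [::] isT).1 x Vx) ((HM [::] isT).1 x Vx)).
  by apply: derivable_mulmx; [apply: (Hu [::] isT).2 | apply: (HM [::] isT).2].
case/lastP => [_|t a].
  split => [x Vx|x a Vx] /=.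
    exact: (cvg_mulmx _ ((Hu [::] isT).1 x Vx) ((HM [::] isT).1 x Vx)).
  by apply: derivable_mulmx; [apply: (Hu [::] isT).2 | apply: (HM [::] isT).2].
rewrite size_rcons ltnS => ht.
rewrite /Pd -iter_pd_rcons.
have E : forall y, V y -> (fun y => pd a u y *m M y + u y *m pd a M y) y =
    pd a (fun y => u y *m M y) y.
  move=> y Vy /=; rewrite /pd derive_mulmx //.
    exact: (Hu [::] isT).2.
  exact: (HM [::] isT).2.
apply: (Pd_eqV E); apply: (@upto_add _ m (fun y => pd a u y *m M y)
   (fun y => u y *m pd a M y)) => //.
  apply: IH; first exact: upto_pd.
  exact: upto_le HM.
apply: IH; first exact: upto_le Hu.
exact: upto_pd.
Qed.

Lemma smooth_add (W : normedModType R) (f g : P -> W) :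
  smooth_on V f -> smooth_on V g -> smooth_on V (fun y => f y + g y).
Proof.
move=> /upto_smooth Hf /upto_smooth Hg; apply/upto_smooth => m.
exact: upto_add.
Qed.

Lemma smooth_opp (W : normedModType R) (f : P -> W) :
  smooth_on V f -> smooth_on V (fun y => - f y).
Proof.
move=> /upto_smooth Hf; apply/upto_smooth => m.
exact: upto_opp.
Qed.

Lemma smooth_sub (W : normedModType R) (f g : P -> W) :
  smooth_on V f -> smooth_on V g -> smooth_on V (fun y => f y - g y).
Proof.
move=> Hf Hg; apply: (@smooth_add _ f (fun y => - g y)) => //.
exact: smooth_opp.
Qed.

Lemma smooth_pd (W : normedModType R) a (f : P -> W) :
  smooth_on V f -> smooth_on V (pd a f).
Proof.
move=> /upto_smooth Hf; apply/upto_smooth => m.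
exact: upto_pd.
Qed.

Lemma smooth_mul p q s (u : P -> 'M[R]_(p,q)) (M : P -> 'M[R]_(q,s)) :
  smooth_on V u -> smooth_on V M -> smooth_on V (fun y => u y *m M y).
Proof.
move=> /upto_smooth Hu /upto_smooth HM; apply/upto_smooth => m.
exact: upto_mul.
Qed.

Lemma smooth_der (W : normedModType R) (f : P -> W) x a :
  smooth_on V f -> V x -> derivable f x (ecoord R a).
Proof. by move=> Hf Vx; apply: (Hf [::]).2. Qed.

End Smooth.

Lemma smooth_subset (R : realType) n (W : normedModType R) (U V : set 'rV[R]_n)
  (f : 'rV[R]_n -> W) : smooth_on U f -> V `<=` U -> smooth_on V f.
Proof.
move=> H VU s; split => [x Vx|x a Vx].
  by apply: (H s).1; apply: VU.
by apply: (H s).2; apply: VU.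
Qed.

Lemma zmod_e1 (M : zmodType) (a1 a2 b1 b2 : M) :
  (a1 - a2) + (b1 - b2) = (a1 + b1) - (a2 + b2).
Proof. by rewrite addrACA opprD. Qed.

Lemma zmod_e2 (M : zmodType) (a1 a2 b1 b2 : M) :
  (a1 - a2) - (b1 - b2) = (a1 - b1) - (a2 - b2).
Proof. by rewrite !opprD !opprK addrACA. Qed.

Section Conn.
Variables (R : realType) (n k : nat) (A : 'I_n -> 'rV[R]_n -> 'M[R]_k).
Variables (V : set 'rV[R]_n).
Hypothesis oV : open V.
Local Notation P := 'rV[R]_n.

Lemma pd_sub (W : normedModType R) (f g : P -> W) a x :
  derivable f x (ecoord R a) -> derivable g x (ecoord R a) ->
  pd a (fun y => f y - g y) x = pd a f x - pd a g x.
Proof. move=> df dg; exact: deriveB. Qed.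

Lemma pd_add (W : normedModType R) (f g : P -> W) a x :
  derivable f x (ecoord R a) -> derivable g x (ecoord R a) ->
  pd a (fun y => f y + g y) x = pd a f x + pd a g x.
Proof. move=> df dg; exact: deriveD. Qed.

Lemma smooth_Dsec (eta : sec R n k) a :
  (forall a, smooth_on V (A a)) -> smooth_on V eta -> smooth_on V (Dsec A eta a).
Proof.
move=> sA se.
have H := smooth_add oV (smooth_pd a se) (smooth_mul oV se (sA a)).
exact: H.
Qed.


Lemma Dwedge_sub (f g : sec1 R n k) a b x :
  smooth1 V f -> smooth1 V g -> V x ->
  Dwedge A (fun c y => f c y - g c y) a b x = Dwedge A f a b x - Dwedge A g a b x.
Proof.
move=> sf sg Vx; rewrite /Dwedge.
rewrite (@pd_sub _ (f b) (g b) a x); [|exact: smooth_der|exact: smooth_der].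
rewrite (@pd_sub _ (f a) (g a) b x); [|exact: smooth_der|exact: smooth_der].
rewrite !mulmxBl -scalerBr.
rewrite !zmod_e1 zmod_e2.
by [].
Qed.

Lemma Dwedge_eqV (f g : sec1 R n k) a b x :
  (forall c y, V y -> f c y = g c y) -> V x ->
  Dwedge A f a b x = Dwedge A g a b x.
Proof.
move=> E Vx; rewrite /Dwedge /pd (E a x Vx) (E b x Vx).
rewrite (near_eq_derive _ (nearV_eq oV Vx (E a))).
by rewrite (near_eq_derive _ (nearV_eq oV Vx (E b))).
Qed.

Lemma Dsec_sub (f g : sec R n k) a x :
  smooth_on V f -> smooth_on V g -> V x ->
  Dsec A (fun y => f y - g y) a x = Dsec A f a x - Dsec A g a x.
Proof.
move=> sf sg Vx; rewrite /Dsec.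
rewrite (@pd_sub _ f g a x); [|exact: smooth_der|exact: smooth_der].
by rewrite mulmxBl zmod_e1.
Qed.

Lemma Dsec_add (f g : sec R n k) a x :
  smooth_on V f -> smooth_on V g -> V x ->
  Dsec A (fun y => f y + g y) a x = Dsec A f a x + Dsec A g a x.
Proof.
move=> sf sg Vx; rewrite /Dsec.
rewrite (@pd_add _ f g a x); [|exact: smooth_der|exact: smooth_der].
by rewrite mulmxDl addrACA.
Qed.
End Conn.

Set Implicit Arguments.
Unset Implicit Arguments.
Set Strict Implicit.

Theorem proposition2p8 (R : realType) (n k r : nat) (U : set 'rV[R]_n)
    (A : 'I_n -> 'rV[R]_n -> 'M[R]_k) (Fr : 'rV[R]_n -> 'M[R]_(r, k)) :
  open U ->
  (forall a, smooth_on U (A a)) ->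
  smooth_on U Fr ->
  (forall x, U x -> row_free (Fr x)) ->
  parallel A Fr U ->
  exact_sub A Fr U ->
  exact_quot A Fr U ->
  curv_quot_injective A Fr U ->
  exact_conn A U.
Proof.
move=> oU sA sF frF par exS exQ inj V oV VU phi psi sphi spsi Heq.
have sAV : forall a, smooth_on V (A a).
  by move=> a; apply: smooth_subset (sA a) VU.
have [eta1 [se1 H1]] : exists eta : sec R n k, smooth_on V eta /\
    forall a x, V x -> inF Fr x (Dsec A eta a x - phi a x).
  apply: (exQ V oV VU phi psi sphi spsi) => a b x Vx.
  by rewrite Heq // subrr /inF sub0mx.
pose phi' : sec1 R n k := fun a x => phi a x - Dsec A eta1 a x.
pose psi' : sec R n k := fun x => psi x - eta1 x.
have sDe1 : forall a, smooth_on V (Dsec A eta1 a).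
  by move=> a; apply: smooth_Dsec.
have sphi' : smooth1 V phi'.
  by move=> a; apply: (smooth_sub oV (sphi a) (sDe1 a)).
have spsi' : smooth_on V psi' by apply: (smooth_sub oV spsi se1).
have inphi' : forall a x, V x -> inF Fr x (phi' a x).
  by move=> a x Vx; rewrite /phi' /inF -opprB eqmx_opp; apply: H1.
have sDpsi : forall a, smooth_on V (Dsec A psi a).
  by move=> a; apply: smooth_Dsec.
have Hw : forall a b x, V x -> Dwedge A phi' a b x = curv A psi' a b x.
  move=> a b x Vx.
  rewrite /phi'.
  rewrite (Dwedge_sub A (V:=V) (f:=phi) (g:=Dsec A eta1) a b sphi sDe1 Vx).
  rewrite (Heq a b x Vx) /curv.
  have E : forall c y, V y -> Dsec A psi' c y = Dsec A psi c y - Dsec A eta1 c y.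
    by move=> c y Vy; rewrite /psi' (Dsec_sub A (V:=V) (f:=psi) (g:=eta1) c spsi se1 Vy).
  rewrite (Dwedge_eqV A oV (f:=Dsec A psi') a b E Vx).
  by rewrite (Dwedge_sub A (V:=V) (f:=Dsec A psi) (g:=Dsec A eta1) a b sDpsi sDe1 Vx).
have inW : forall a b x, V x -> inF Fr x (Dwedge A phi' a b x).
  move=> a b x Vx; rewrite /inF /Dwedge; apply: scalemx_sub.
  apply: addmx_sub; last rewrite eqmx_opp.
    exact: (par V oV VU (phi' b) (sphi' b) (inphi' b) a x Vx).
  exact: (par V oV VU (phi' a) (sphi' a) (inphi' a) b x Vx).
have inpsi' : forall x, V x -> inF Fr x (psi' x).
  apply: (inj V oV VU psi' spsi') => a b x Vx.
  by rewrite -Hw //; apply: inW.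
have [eta2 [se2 [_ H2]]] := exS V oV VU phi' psi' sphi' spsi' inphi' inpsi' Hw.
exists (fun x => eta1 x + eta2 x); split.
  exact: (smooth_add oV se1 se2).
move=> a x Vx; rewrite (Dsec_add A (V:=V) (f:=eta1) (g:=eta2) a se1 se2 Vx) (H2 a x Vx).
by rewrite /phi' addrC subrK.
Qed.
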